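(* Let $n\in\mathbb{N}$, $m\in\{1,\dots,n\}$ and $\alpha\in[0,1]$. In the additive noise ordinal optimisation model (see context), the success probability satisfies $$1-(1-\alpha)^{m}\;\le\; p^{\mathrm{A}}_{\mathrm{success}}(n,m,\alpha)\;\le\; 1-(1-\alpha)^{n}.$$
   Context: Ordinal optimisation model: let $(Z_1,X_1),\dots,(Z_n,X_n)$ be i.i.d. copies of a pair $(Z,X)$ of real random variables. Order the observations $Z_1,\dots,Z_n$ increasingly as $Z_{1:n}\le\dots\le Z_{n:n}$ and, for $i=1,\dots,m$, let $X_{\langle i\rangle}$ denote the $X$-value paired with $Z_{i:n}$ (the concomitant). Let $x^*_\alpha$ be the $\alpha$-quantile of $X$ (so $\Pr(X\le x^*_\alpha)=\alpha$ for continuous $X$). The success probability is $$p_{\mathrm{success}}(n,m,\alpha)=\Pr\Big(\min_{1\le i\le m}X_{\langle i\rangle}\le x^*_\alpha\Big).$$ Additive noise model: $Z_i=X_i+Y_i$ where $X_i$ and $Y_i$ are independent continuous random variables (with $(X_i,Y_i)$ i.i.d. over $i$); the success probability in this model is denoted $p^{\mathrm{A}}_{\mathrm{success}}(n,m,\alpha)$. *)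

(* Defs.v *)
From HB Require Import structures.
From mathcomp Require Import all_boot all_order all_algebra.
From mathcomp Require Import all_classical all_reals all_analysis.
Set Implicit Arguments. Unset Strict Implicit. Unset Printing Implicit Defensive.
Import Order.TTheory GRing.Theory Num.Theory.
Local Open Scope classical_set_scope.
Local Open Scope ring_scope.

(* rank z j = (position of z j in the increasing ordering of z) - 1, ties
   broken by index (stable sort); z_{(rank z j)+1 : n} = z j.  The map j |-> rank z j
   is a bijection 'I_n -> {0,..,n-1}. *)
Definition rank (R : realType) (n : nat) (z : 'I_n -> R) (j : 'I_n) : nat :=
  #|[set k : 'I_n | (z k < z j) || ((z k == z j) && (k < j)%N)]|.

Definition mutual_indep (d : measure_display) (T : measurableType d) (R : realType)
  (P : probability T R) (I : finType) (V : I -> T -> R) : Prop :=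
  forall B : I -> set R, (forall i, measurable (B i)) ->
    P (\bigcap_(i in [set: I]) (V i @^-1` B i)) =
    (\prod_(i : I) fine (P (V i @^-1` B i)))%:E.

Definition same_law (d : measure_display) (T : measurableType d) (R : realType)
  (P : probability T R) (U V : T -> R) : Prop :=
  forall B : set R, measurable B -> P (U @^-1` B) = P (V @^-1` B).

Definition atomless (d : measure_display) (T : measurableType d) (R : realType)
  (P : probability T R) (U : T -> R) : Prop :=
  forall r : R, P (U @^-1` [set r]) = 0%E.

(* Success event: min_{1<=i<=m} X_<i> <= x, i.e. some index among the m
   smallest Z-values has X-value <= x. *)
Definition success_event (T : Type) (R : realType) (n m : nat)
  (Z X : 'I_n -> T -> R) (x : \bar R) : set T :=
  [set w | exists j : 'I_n, (rank (fun k => Z k w) j < m)%N /\ ((X j w)%:E <= x)%E].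

(* Main.v *)
Require Import Defs.
From HB Require Import structures.
From mathcomp Require Import all_boot all_order all_algebra.
From mathcomp Require Import all_classical all_reals all_analysis.
Import Order.TTheory GRing.Theory Num.Theory.
Set Implicit Arguments. Unset Strict Implicit. Unset Printing Implicit Defensive.
Local Open Scope ring_scope.

Lemma card_lt_sub (T : finType) (A B : {set T}) x : A \subset B -> x \in B -> x \notin A -> (#|A| < #|B|)%N.
Proof. move=> AB xB xA; apply: proper_card; apply/properP; split => //; by exists x. Qed.

Section RankLemmas.
Variables (R : realType) (n : nat).
Implicit Types (z : 'I_n -> R).

Definition ltk z (k j : 'I_n) := (z k < z j) || ((z k == z j) && (k < j)%N).

Lemma rankE z j : rank z j = #|[set k | ltk z k j]|.
Proof.
rewrite /rank; apply: eq_card => k; rewrite [in RHS]inE.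
by apply/idP/idP; rewrite inE.
Qed.

Lemma ltk_irr z j : ltk z j j = false.
Proof. by rewrite /ltk ltxx eqxx ltnn. Qed.

Lemma ltk_trans z i j k : ltk z i j -> ltk z j k -> ltk z i k.
Proof.
rewrite /ltk => /orP[h1|/andP[/eqP e1 h1]] /orP[h2|/andP[/eqP e2 h2]].
- by rewrite (lt_trans h1 h2).
- by rewrite -e2 h1.
- by rewrite e1 h2.
- by rewrite e1 e2 eqxx (ltn_trans h1 h2) orbT.
Qed.

Lemma ltk_total z j k : j != k -> ltk z j k || ltk z k j.
Proof.
move=> jk; rewrite /ltk; case: (ltgtP (z j) (z k)) => //= e.
rewrite ?e ?eqxx /=; case: (ltngtP j k) => // /val_inj ejk.
by rewrite ejk eqxx in jk.
Qed.

Lemma ltk_asym z j k : ltk z j k -> ltk z k j = false.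
Proof.
move=> h; apply/negP => h'; have := ltk_trans h h'; by rewrite ltk_irr.
Qed.

Lemma rank_ltk z j k : ltk z j k -> (rank z j < rank z k)%N.
Proof.
move=> h; rewrite !rankE; apply: (@card_lt_sub _ _ _ j).
- by apply/fintype.subsetP => i; rewrite !inE => hi; apply: ltk_trans hi h.
- by rewrite inE.
- by rewrite inE ltk_irr.
Qed.

Lemma rank_inj z : injective (rank z).
Proof.
move=> j k e; apply/eqP; apply/negPn/negP => jk.
case/orP: (ltk_total z jk) => /(rank_ltk) h; by rewrite e ltnn in h.
Qed.

Lemma rank_ltn z j : (rank z j < n)%N.
Proof.
rewrite rankE; apply: (@leq_trans #|[set: 'I_n]|); last by rewrite cardsT card_ord.
apply: (@card_lt_sub _ _ _ j); first exact: finset.subsetT.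
  by rewrite inE.
by rewrite inE ltk_irr.
Qed.

Definition rord z j : 'I_n := Ordinal (rank_ltn z j).

Lemma rord_inj z : injective (rord z).
Proof. by move=> j k /(congr1 val) /= /rank_inj. Qed.

Lemma card_lt_ord m : (m <= n)%N -> #|[set i : 'I_n | (i < m)%N]| = m.
Proof.
move=> mn.
have -> : [set i : 'I_n | (i < m)%N] = [set widen_ord mn i | i : 'I_m].
  apply/setP => i; rewrite !inE; apply/idP/imsetP.
    by move=> im; exists (Ordinal im) => //; apply: val_inj.
  by case=> k _ ->; rewrite /= ltn_ord.
by rewrite card_imset ?card_ord //; by move=> a b /(congr1 val) /= /val_inj.
Qed.

Lemma card_S z m : (m <= n)%N -> #|[set j | (rank z j < m)%N]| = m.
Proof.
move=> mn.
have -> : [set j | (rank z j < m)%N] = rord z @^-1: [set i : 'I_n | (i < m)%N].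
  by apply/setP => j; rewrite !inE.
by rewrite card_preimset ?card_lt_ord //; exact: rord_inj.
Qed.

Lemma ltk_mono z z' t u : z' t <= z t -> z u <= z' u -> ltk z t u -> ltk z' t u.
Proof.
rewrite /ltk => h1 h2 /orP[h|/andP[/eqP e h]].
  by rewrite (le_lt_trans h1 (lt_le_trans h h2)).
have : z' t <= z' u by rewrite (le_trans h1) // e.
rewrite le_eqVlt => /orP[->|->] //; by rewrite h orbT.
Qed.

Lemma S_stable z z' m (T : {set 'I_n}) : (m <= n)%N ->
  [set j | (rank z j < m)%N] = T ->
  (forall t, t \in T -> z' t <= z t) ->
  (forall u, u \notin T -> z u <= z' u) ->
  [set j | (rank z' j < m)%N] = T.
Proof.
move=> mn ST h1 h2.
have key : forall t u, t \in T -> u \notin T -> ltk z t u.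
  move=> t u tT uT; have tu : t != u by apply: contraNneq uT => <-.
  case/orP: (ltk_total z tu) => // /rank_ltk h.
  have tT' : (rank z t < m)%N by move: tT; rewrite -ST inE.
  by move: uT; rewrite -ST inE (ltn_trans h tT').
have sub : T \subset [set j | (rank z' j < m)%N].
  apply/fintype.subsetP => t tT; rewrite inE rankE.
  have cT : #|T| = m by rewrite -ST card_S.
  apply: (@leq_ltn_trans #|T :\ t|).
    apply: subset_leq_card; apply/fintype.subsetP => k; rewrite !inE => hk.
    apply/andP; split.
      by apply: contraTneq hk => ->; rewrite ltk_irr.
    apply/negPn/negP => kT.
    have := ltk_mono (h1 t tT) (h2 k kT) (key t k tT kT).
    by rewrite (ltk_asym hk).
  by rewrite -cT [in X in (_ < X)%N](cardsD1 t T) tT add1n.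
apply/eqP; rewrite eq_sym eqEcard sub card_S // -ST card_S //. by rewrite leqnn.
Qed.

End RankLemmas.

From mathcomp Require Import fingroup perm.


Section Swap.
Variable n : nat.
Implicit Types (U W : {set 'I_n}).

Definition swapf U W (x : 'I_n) : 'I_n :=
  if x \in U then nth x (enum W) (index x (enum U))
  else if x \in W then nth x (enum U) (index x (enum W)) else x.

Definition swok U W := (#|U| == #|W|) && [disjoint U & W].

Definition sw U W x := if swok U W then swapf U W x else x.

Lemma swapf_U U W x : #|U| = #|W| -> x \in U -> swapf U W x \in W.
Proof.
move=> c xU; rewrite /swapf xU -mem_enum mem_nth //.
by rewrite -cardE -c cardE index_mem mem_enum.
Qed.

Lemma swapf_W U W x : #|U| = #|W| -> [disjoint U & W] -> x \in W -> swapf U W x \in U.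
Proof.
move=> c dUW xW; have xU : x \notin U by rewrite (disjointFl dUW).
rewrite /swapf (negbTE xU) xW -mem_enum mem_nth //.
by rewrite -cardE c cardE index_mem mem_enum.
Qed.

Lemma swapf_K U W x : #|U| = #|W| -> [disjoint U & W] -> swapf U W (swapf U W x) = x.
Proof.
move=> c dUW; case: (boolP (x \in U)) => xU.
  have yW := swapf_U c xU; have yU : swapf U W x \notin U by rewrite (disjointFl dUW).
  rewrite {1}/swapf (negbTE yU) yW.
  move: yW; rewrite /swapf xU => yW.
  rewrite index_uniq ?enum_uniq //; last by rewrite -cardE -c cardE index_mem mem_enum.
  by rewrite nth_index // mem_enum.
case: (boolP (x \in W)) => xW; last by rewrite /swapf (negbTE xU) (negbTE xW) (negbTE xU) (negbTE xW).
have yU := swapf_W c dUW xW.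
rewrite {1}/swapf yU.
move: yU; rewrite /swapf (negbTE xU) xW => yU.
rewrite index_uniq ?enum_uniq //; last by rewrite -cardE c cardE index_mem mem_enum.
by rewrite nth_index // mem_enum.
Qed.

Lemma sw_K U W : involutive (sw U W).
Proof.
move=> x; rewrite /sw; case: (boolP (swok U W)) => // ok.
by case/andP: ok => /eqP c d; exact: swapf_K.
Qed.

Definition swp U W : {perm 'I_n} := perm (inv_inj (@sw_K U W)).

Lemma swpE U W x : swp U W x = sw U W x.
Proof. by rewrite permE. Qed.

Lemma swp_K U W x : swp U W (swp U W x) = x.
Proof. by rewrite !swpE sw_K. Qed.

Lemma swp_U U W x : swok U W -> x \in U -> swp U W x \in W.
Proof. by move=> ok xU; rewrite swpE /sw ok; case/andP: ok => /eqP c _; exact: swapf_U. Qed.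

Lemma swp_W U W x : swok U W -> x \in W -> swp U W x \in U.
Proof. by move=> ok xW; rewrite swpE /sw ok; case/andP: ok => /eqP c d; exact: swapf_W. Qed.

Lemma swp_out U W x : x \notin U -> x \notin W -> swp U W x = x.
Proof.
move=> xU xW; rewrite swpE /sw; case: (swok U W) => //.
by rewrite /swapf (negbTE xU) (negbTE xW).
Qed.

End Swap.

Section Cfg.
Variables (R : realType) (n m : nat) (xa : \bar R).
Hypothesis mn : (m <= n)%N.
Local Notation cT_ := ({set 'I_n} * {set 'I_n})%type.

Definition zf (v : 'I_n + 'I_n -> R) (k : 'I_n) := v (inl k) + v (inr k).

Definition cfg (v : 'I_n + 'I_n -> R) : {set 'I_n} * {set 'I_n} :=
  ([set j | (rank (zf v) j < m)%N], [set j | (xa < (v (inl j))%:E)%E]).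

Definition vperm (s : 'I_n -> 'I_n) (v : 'I_n + 'I_n -> R) : 'I_n + 'I_n -> R :=
  fun i => match i with inl k => v (inl (s k)) | inr k => v (inr k) end.

Definition A0 : {set 'I_n} := [set i : 'I_n | (i < m)%N].
Definition Uc (T : {set 'I_n}) := A0 :\: T.
Definition Wc (T : {set 'I_n}) := T :\: A0.
Definition rho (T : {set 'I_n}) := swp (Uc T) (Wc T).
Definition Ec (c : {set 'I_n} * {set 'I_n}) := Uc c.1 :\: c.2.
Definition W'c (c : {set 'I_n} * {set 'I_n}) := rho c.1 @: Ec c.
Definition pic (c : {set 'I_n} * {set 'I_n}) := swp (Ec c) (W'c c).
Definition gc c : {set 'I_n} * {set 'I_n} := (c.1, [set k | pic c k \in c.2]).
Definition Dc := [set c : {set 'I_n} * {set 'I_n} | (c.1 \subset c.2) && (#|c.1| == m)].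

Lemma card_A0 : #|A0| = m.
Proof. exact: card_lt_ord. Qed.

Lemma ok_UW (T : {set 'I_n}) : #|T| = m -> swok (Uc T) (Wc T).
Proof.
move=> cT; apply/andP; split.
  by rewrite /Uc /Wc !cardsD card_A0 cT finset.setIC.
rewrite -setI_eq0; apply/eqP/setP => x; rewrite !inE.
by case: (x \in T); case: (x \in A0); rewrite ?andbF.
Qed.

Lemma W'_sub (c : cT_) : #|c.1| = m -> W'c c \subset Wc c.1.
Proof.
move=> cT; apply/fintype.subsetP => y /imsetP[x xE ->].
apply: swp_U; first exact: ok_UW.
by move: xE; rewrite /Ec inE => /andP[].
Qed.

Lemma ok_EW (c : cT_) : #|c.1| = m -> swok (Ec c) (W'c c).
Proof.
move=> cT; apply/andP; split.
  by rewrite /W'c card_imset //; exact: perm_inj.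
rewrite -setI_eq0; apply/eqP/setP => x; rewrite !inE.
case: (boolP (x \in W'c c)) => xW; rewrite ?andbF ?andbT //.
have := fintype.subsetP (W'_sub cT) x xW; rewrite /Ec /Uc /Wc !inE.
by case/andP => h1 h2; rewrite h2 (negbTE h1) !andbF.
Qed.

Lemma E_U (c : cT_) x : x \in Ec c -> x \in Uc c.1.
Proof. by rewrite /Ec inE => /andP[]. Qed.

Lemma gc_A0 (c : cT_) : c \in Dc -> A0 \subset (gc c).2.
Proof.
rewrite inE => /andP[TB /eqP cT]; apply/fintype.subsetP => x; rewrite inE => xA; rewrite /gc inE /=.
have okEW := ok_EW cT.
have W'W := fintype.subsetP (W'_sub cT).
case: (boolP (x \in c.1)) => xT.
  rewrite swp_out; first exact: (fintype.subsetP TB).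
    by apply: contraTN xT => /E_U; rewrite /Uc inE => /andP[].
  by apply/negP => /W'W; rewrite /Wc !inE xA.
case: (boolP (x \in Ec c)) => xE.
  apply: (fintype.subsetP TB); have := W'W _ (swp_U okEW xE).
  by rewrite /Wc inE => /andP[].
rewrite swp_out //; last first.
  by apply/negP => /W'W; rewrite /Wc !inE xA.
by move: xE; rewrite /Ec /Uc !inE xA xT /= andbT negbK.
Qed.

Lemma W'_rec (c : cT_) : c \in Dc -> Wc c.1 :\: (gc c).2 = W'c c.
Proof.
rewrite inE => /andP[TB /eqP cT].
have okEW := ok_EW cT.
have W'W := fintype.subsetP (W'_sub cT).
apply/setP => y; rewrite /gc finset.in_setD finset.in_set /=.
case: (boolP (y \in W'c c)) => yW.
  have := swp_W okEW yW; rewrite /Ec finset.in_setD => /andP[-> _] /=.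
  by rewrite W'W.
rewrite andbC; case: (boolP (y \in Wc c.1)) => yWc //=.
rewrite /pic swp_out //.
  by apply/negbF; apply: (fintype.subsetP TB); move: yWc; rewrite /Wc finset.in_setD => /andP[].
apply/negP => /E_U; rewrite /Uc finset.in_setD; move: yWc; rewrite /Wc finset.in_setD.
by case/andP => _ ->.
Qed.

Lemma gc_inj : {in Dc &, injective gc}.
Proof.
move=> [T1 B1] [T2 B2] D1 D2 e.
have eT : T1 = T2 by move: e => [].
subst T2.
have eW : W'c (T1, B1) = W'c (T1, B2) by rewrite -W'_rec // -[RHS]W'_rec // e.
have eE : Ec (T1, B1) = Ec (T1, B2).
  by apply: (imset_inj (@perm_inj _ (rho T1))); exact: eW.
have epi : pic (T1, B1) = pic (T1, B2) by rewrite /pic eE eW.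
move: e => [] /setP e'; congr (_, _); apply/setP => x.
have := e' (pic (T1, B1) x); rewrite !inE /= swp_K [in X in _ = X -> _]epi swp_K.
by [].
Qed.

Lemma card_cfg1 (v : 'I_n + 'I_n -> R) : #|(cfg v).1| = m.
Proof. exact: card_S. Qed.

Lemma cfg_perm (v : 'I_n + 'I_n -> R) (c : cT_) : cfg v = c -> c \in Dc -> cfg (vperm (pic c) v) = gc c.
Proof.
move=> hc cD; move: (cD); rewrite inE => /andP[TB /eqP cT].
have okEW := ok_EW cT.
have W'W := fintype.subsetP (W'_sub cT).
have hB : forall j, (j \in c.2) = (xa < (v (inl j))%:E)%E.
  by move=> j; rewrite -hc inE.
have hT : [set j | (rank (zf v) j < m)%N] = c.1 by rewrite -hc.
rewrite /cfg /gc; congr (_, _).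
  apply: (S_stable mn hT).
    move=> t tT; rewrite /zf /vperm lerD2r.
    case: (boolP (t \in W'c c)) => tW.
      have pE := swp_W okEW tW.
      have : (xa < (v (inl t))%:E)%E by rewrite -hB (fintype.subsetP TB).
      have : ~~ (xa < (v (inl (pic c t)))%:E)%E.
        by rewrite -hB; move: pE; rewrite /Ec inE => /andP[].
      rewrite -leNgt => h1 h2; rewrite ltW //.
      by rewrite -lte_fin (le_lt_trans h1 h2).
    rewrite /pic swp_out //.
    by apply: contraTN tT => /E_U; rewrite /Uc inE => /andP[].
  move=> u uT; rewrite /zf /vperm lerD2r.
  case: (boolP (u \in Ec c)) => uE.
    have pW := swp_U okEW uE.
    have : (xa < (v (inl (pic c u)))%:E)%E.
      rewrite -hB (fintype.subsetP TB) //.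
      by have := W'W _ pW; rewrite /Wc inE => /andP[].
    have : ~~ (xa < (v (inl u))%:E)%E.
      by rewrite -hB; move: uE; rewrite /Ec inE => /andP[].
    rewrite -leNgt => h1 h2; rewrite ltW //.
    by rewrite -lte_fin (le_lt_trans h1 h2).
  rewrite /pic swp_out //.
  apply/negP => /W'W; rewrite /Wc inE => /andP[_ uT']; by rewrite uT' in uT.
by apply/setP => j; rewrite !inE hB.
Qed.

End Cfg.

Definition Om (R : realType) (n : nat) := 'I_n + 'I_n -> R.
HB.instance Definition _ (R : realType) n := gen_eqMixin (Om R n).
HB.instance Definition _ (R : realType) n := gen_choiceMixin (Om R n).
HB.instance Definition _ (R : realType) n := isPointed.Build (Om R n) (fun _ => 0).

Section Meas.
Local Open Scope classical_set_scope.
Context d (T : measurableType d) (R : realType) (P : probability T R) (n : nat)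
  (X Y : 'I_n -> T -> R).
Hypothesis mX : forall k, measurable_fun setT (X k).
Hypothesis mY : forall k, measurable_fun setT (Y k).
Let Fam := fun i : 'I_n + 'I_n => match i with inl k => X k | inr k => Y k end.
Hypothesis indep : mutual_indep P Fam.
Hypothesis lawX : forall i j, same_law P (X i) (X j).

Definition rect (B : 'I_n + 'I_n -> set R) : set (Om R n) := [set v | forall i, B i (v i)].
Definition Gr : set (set (Om R n)) :=
  [set A | exists B : 'I_n + 'I_n -> set R, (forall i, measurable (B i)) /\ A = rect B].
Local Notation OmT := (g_sigma_algebraType Gr).

Definition Vf (s : 'I_n -> 'I_n) (w : T) : OmT :=
  fun i => match i with inl k => X (s k) w | inr k => Y k w end.

Definition Bs (s : {perm 'I_n}) (B : 'I_n + 'I_n -> set R) :=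
  fun i => match i with inl k => B (inl (s^-1 k)%g) | inr k => B (inr k) end.

Lemma Vf_rect (s : {perm 'I_n}) B :
  Vf s @^-1` rect B = \bigcap_(i in [set: 'I_n + 'I_n]) (Fam i @^-1` Bs s B i).
Proof.
apply/seteqP; split => w /=.
  move=> h [k|k] _ /=; rewrite /Bs; last exact: (h (inr k)).
  by have := h (inl (s^-1 k)%g); rewrite /= permKV.
move=> h [k|k] /=; last exact: (h (inr k) I).
by have := h (inl (s k)) I; rewrite /= /Bs permK.
Qed.

Lemma Fam_meas i B : measurable B -> measurable (Fam i @^-1` B).
Proof.
move=> mB; rewrite -[X in measurable X]setTI.
by case: i => k /=; [exact: mX | exact: mY].
Qed.

Lemma rect_meas_pre (s : {perm 'I_n}) B : (forall i, measurable (B i)) ->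
  measurable (Vf s @^-1` rect B).
Proof.
move=> mB; rewrite Vf_rect; apply: fin_bigcap_measurable.
  exact: finite_finset.
by move=> [k|k] _; apply: Fam_meas; rewrite /Bs; apply: mB.
Qed.

Lemma mVf (s : {perm 'I_n}) : measurable_fun setT (Vf s).
Proof.
apply: (@measurability _ _ _ _ setT (Vf s) Gr); first by [].
rewrite /preimage_set_system => _ [A [B [mB ->]] <-]; rewrite setTI.
exact: rect_meas_pre.
Qed.

Lemma prod_perm (s : {perm 'I_n}) B : (forall i, measurable (B i)) ->
  \prod_i fine (P (Fam i @^-1` Bs s B i)) = \prod_i fine (P (Fam i @^-1` B i)).
Proof.
move=> mB; rewrite !big_sumType /=; congr (_ * _).
rewrite (reindex_inj (@perm_inj _ s)) /=; apply: eq_bigr => k _.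
by rewrite permK (lawX (s k) k).
Qed.

Lemma rect_law (s : {perm 'I_n}) B : (forall i, measurable (B i)) ->
  P (Vf s @^-1` rect B) = P (Vf (1%g : {perm 'I_n}) @^-1` rect B).
Proof.
move=> mB; rewrite !Vf_rect !indep; last 2 first.
- by move=> [k|k]; apply: mB.
- by move=> [k|k]; apply: mB.
by rewrite !prod_perm.
Qed.

Lemma law_perm (s : {perm 'I_n}) (A : set OmT) : measurable A ->
  P (Vf s @^-1` A) = P (Vf (1%g : {perm 'I_n}) @^-1` A).
Proof.
move=> mA.
have := @measure_unique _ R OmT Gr (fun=> setT) erefl _ _ _
  (pushforward P (Vf s)) (pushforward P (Vf (1%g : {perm 'I_n}))) _ _ A mA.
apply.
- move=> _ _ [B1 [mB1 ->]] [B2 [mB2 ->]]; exists (fun i => B1 i `&` B2 i); split.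
    by move=> i; apply: measurableI.
  by apply/seteqP; split => v /=; [move=> [h1 h2] i; split | move=> h; split => i; case: (h i)].
- by move=> _; exists (fun=> setT); split => //; apply/seteqP; split.
- by rewrite bigcup_const.
- exact: mVf.
- exact: mVf.
- by move=> ? ? _ [B [mB ->]]; rewrite /pushforward; exact: rect_law.
- by move=> ? _ /=; rewrite /pushforward /= preimage_setT probability_setT ltry.
Qed.

End Meas.

Section MG.
Local Open Scope classical_set_scope.
Lemma meas_gt (R : realType) (xa : \bar R) : measurable [set r : R | (xa < r%:E)%E].
Proof.
case: xa => [r0| |].
- have -> : [set r : R | (r0%:E < r%:E)%E] = `]r0, +oo[%classic.
    by apply/seteqP; split => r /=; rewrite lte_fin in_itv /= andbT.
  exact: measurable_itv.
- have -> : [set r : R | (+oo < r%:E)%E] = set0.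
    by apply/seteqP; split => r //=.
  exact: measurable0.
- have -> : [set r : R | (-oo < r%:E)%E] = setT.
    by apply/seteqP; split => r //= _; exact: ltNyr.
  exact: measurableT.
Qed.
End MG.

Section Ev.
Local Open Scope classical_set_scope.
Context (R : realType) (n m : nat) (xa : \bar R).
Local Notation OmT := (g_sigma_algebraType (@Gr R n)).

Lemma mcoord i : measurable_fun setT (fun v : OmT => v i).
Proof.
move=> _ A mA; rewrite setTI; apply: sub_sigma_algebra.
exists (fun j => if j == i then A else setT); split.
  by move=> j; case: ifP => // _; exact: measurableT.
apply/seteqP; split => v /=.
  by move=> h j; case: ifP => // /eqP ->.
by move=> h; have := h i; rewrite eqxx.
Qed.

Lemma mzf k : measurable_fun setT (fun v : OmT => zf v k).
Proof. by apply: measurable_realfun.measurable_funD; apply: mcoord. Qed.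

Definition atom (i : ('I_n * 'I_n) + 'I_n) (v : Om R n) : bool :=
  match i with inl (k, j) => zf v k < zf v j | inr j => (xa < (v (inl j))%:E)%E end.

Lemma matom i : measurable [set v : OmT | atom i v].
Proof.
case: i => [[k j]|j] /=.
  have := @measurable_realfun.measurable_fun_ltr _ _ _ setT _ _ (mzf k) (mzf j) measurableT [set true] I.
  rewrite setTI; congr measurable; apply/seteqP; split => v /=; by case: (zf v k < zf v j).
have := mcoord (inl j) measurableT (meas_gt xa); rewrite setTI.
by congr measurable.
Qed.

Lemma matom_q i q : measurable [set v : OmT | atom i v = q].
Proof.
case: q.
  by have := matom i; congr measurable; apply/seteqP; split => v /=; case: (atom i v).
have := measurableC (matom i); congr measurable; apply/seteqP; split => v /=;
  by case: (atom i v).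
Qed.

Definition cfgH (f : {ffun ('I_n * 'I_n) + 'I_n -> bool}) : {set 'I_n} * {set 'I_n} :=
  ([set j | (#|[set k | f (inl (k, j)) || (~~ f (inl (k, j)) && ~~ f (inl (j, k)) && (k < j)%N)]| < m)%N]%SET,
   [set j | f (inr j)]%SET).

Lemma cfg_pat (v : Om R n) : cfg m xa v = cfgH [ffun i => atom i v].
Proof.
rewrite /cfg /cfgH; congr (_, _); apply: finset.eq_finset => j; rewrite ?ffunE //.
rewrite rankE; congr (_ < m)%N; apply: eq_card => k; rewrite !inE !ffunE /= /ltk.
by case: (ltgtP (zf v k) (zf v j)).
Qed.

Lemma mMset (Q : pred ({set 'I_n} * {set 'I_n})) :
  measurable [set v : OmT | Q (cfg m xa v)].
Proof.
have -> : [set v : OmT | Q (cfg m xa v)] =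
  \bigcup_(f in [set f | Q (cfgH f)]) \bigcap_(i in [set: ('I_n * 'I_n) + 'I_n])
     [set v : OmT | atom i v = f i].
  apply/seteqP; split => v /=.
    move=> h; exists [ffun i => atom i v]; first by rewrite /= -cfg_pat.
    by move=> i _ /=; rewrite ffunE.
  move=> [f /= Qf hf]; have -> : cfg m xa v = cfgH f => //.
  rewrite cfg_pat; congr cfgH; apply/ffunP => i; rewrite ffunE; exact: hf.
apply: fin_bigcup_measurable; first exact: finite_finset.
move=> f _; apply: fin_bigcap_measurable; first exact: finite_finset.
by move=> i _; exact: matom_q.
Qed.

End Ev.

Section Prob.
Local Open Scope classical_set_scope.
Context d (T : measurableType d) (R : realType) (P : probability T R) (n m : nat)
  (alpha : R) (xa : \bar R) (X Y : 'I_n -> T -> R).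
Hypothesis mX : forall k, measurable_fun setT (X k).
Hypothesis mY : forall k, measurable_fun setT (Y k).
Hypothesis indep : mutual_indep P
  (fun i : 'I_n + 'I_n => match i with inl k => X k | inr k => Y k end).
Hypothesis lawX : forall i j, same_law P (X i) (X j).
Hypothesis hal : forall i, P [set w | ((X i w)%:E <= xa)%E] = alpha%:E.
Hypothesis mn : (m <= n)%N.

Local Notation cT_ := ({set 'I_n} * {set 'I_n})%type.
Local Notation V1 := (Vf X Y (1%g : {perm 'I_n})).

Definition ev (Q : pred cT_) : set T := V1 @^-1` [set v | Q (cfg m xa v)].

Lemma mev Q : measurable (ev Q).
Proof.
rewrite /ev -[X in measurable X]setTI; apply: (mVf mX mY) => //.
exact: mMset.
Qed.

Lemma ev_seq (s : seq cT_) : uniq s ->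
  P (ev (fun c => c \in s)) = (\sum_(c <- s) P (ev (pred1 c)))%E.
Proof.
elim: s => [_|a s IH /= /andP[aNs us]].
  rewrite big_nil; have -> : ev (fun c => c \in [::]) = set0 by apply/seteqP; split.
  exact: measure0.
rewrite big_cons -IH //.
have -> : ev (fun c => c \in a :: s) = ev (pred1 a) `|` ev (fun c => c \in s).
  apply/seteqP; split => w; rewrite /ev /= inE.
    by case/orP; [left|right].
  by case => ->; rewrite ?orbT.
rewrite measureU //; try exact: mev.
apply/seteqP; split => w // [] /=; rewrite /ev /= => /eqP ->.
by rewrite (negbTE aNs).
Qed.

Lemma ev_sum (Q : {pred cT_}) : P (ev Q) = (\sum_(c in Q) P (ev (pred1 c)))%E.
Proof.
rewrite -big_enum -ev_seq ?enum_uniq //; congr (P _).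
by apply/seteqP; split => w; rewrite /ev /= mem_enum.
Qed.

Lemma pX_gt j : P (X j @^-1` [set r | (xa < r%:E)%E]) = (1 - alpha)%:E.
Proof.
have -> : X j @^-1` [set r | (xa < r%:E)%E] = ~` [set w | ((X j w)%:E <= xa)%E].
  apply/seteqP; split => w /=; rewrite leNgt; first by move=> h /negP.
  by move/negP; rewrite negbK.
rewrite probability_setC ?hal //.
have := mX j measurableT (measurableC (meas_gt xa)); rewrite setTI.
congr measurable; apply/seteqP; split => w /=; rewrite ltNge; last by move=> h /negP.
by move/negP; rewrite negbK.
Qed.

Lemma allbad (A : {set 'I_n}) :
  P [set w | forall j, j \in A -> (xa < (X j w)%:E)%E] = ((1 - alpha) ^+ #|A|)%:E.
Proof.
pose B := fun i : 'I_n + 'I_n => match i with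
  inl j => if j \in A then [set r : R | (xa < r%:E)%E] else setT | inr _ => setT end.
have -> : [set w | forall j, j \in A -> (xa < (X j w)%:E)%E] =
  \bigcap_(i in [set: 'I_n + 'I_n])
     ((fun i : 'I_n + 'I_n => match i with inl k => X k | inr k => Y k end) i @^-1` B i).
  apply/seteqP; split => w /=.
    move=> h [j|j] _ //=; rewrite /B; case: ifP => // jA; exact: h.
  by move=> h j jA; have := h (inl j) I; rewrite /= /B jA.
rewrite indep; last first.
  by move=> [j|j]; rewrite /B //; case: ifP => _; [exact: meas_gt|exact: measurableT].
congr (_%:E); rewrite big_sumType /=.
rewrite [X in _ * X]big1 ?mulr1; last first.
  by move=> k _; rewrite preimage_setT probability_setT.
rewrite -prodr_const [RHS]big_mkcond /=; apply: eq_bigr => j _; rewrite /B.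
by case: ifP => _; rewrite ?pX_gt ?preimage_setT ?probability_setT.
Qed.

Lemma Vf_perm (s : {perm 'I_n}) w : Vf X Y s w = vperm s (V1 w).
Proof. by apply/funext => -[k|k] //=; rewrite perm1. Qed.

Lemma q_le (c : cT_) : c \in Dc n m ->
  (P (ev (pred1 c)) <= P (ev (pred1 (gc m c))))%E.
Proof.
move=> cD.
apply: (@le_trans _ _ (P (Vf X Y (pic m c) @^-1` [set v | pred1 (gc m c) (cfg m xa v)]))).
  apply: le_measure; first exact/mem_set/mev.
    apply/mem_set; rewrite -[X in measurable X]setTI; apply: (mVf mX mY) => //; exact: mMset.
  move=> w; rewrite /ev /= => /eqP hc.
  by rewrite Vf_perm (cfg_perm mn hc cD).
by rewrite (law_perm mX mY indep lawX) //; exact: mMset.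
Qed.

Lemma fail_le : (P (ev (fun c => c.1 \subset c.2)) <= ((1 - alpha) ^+ m)%:E)%E.
Proof.
have -> : ev (fun c => c.1 \subset c.2) = ev (mem (Dc n m)).
  apply/seteqP; split => w; rewrite /ev /= inE /=.
    by move=> ->; rewrite (card_cfg1 xa mn) eqxx.
  by case/andP.
rewrite ev_sum.
apply: (@le_trans _ _ (\sum_(c in Dc n m) P (ev (pred1 (gc m c))))%E).
  by apply: lee_sum => c cD; exact: q_le.
rewrite -(big_imset (fun c => P (ev (pred1 c))) (gc_inj mn)).
pose D' := [set c : cT_ | A0 n m \subset c.2]%SET.
apply: (@le_trans _ _ (\sum_(c in D') P (ev (pred1 c)))%E).
  apply: lee_sum_nneg_subset.
    move=> c /imsetP[c0 c0D ->]; rewrite inE; exact: gc_A0.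
  by move=> c _; apply: measure_ge0; exact: mev.
have eA : ev (mem D') = [set w | forall j, j \in A0 n m -> (xa < (X j w)%:E)%E].
  apply/seteqP; split => w; rewrite /ev /= inE /=.
    by move=> /fintype.subsetP h j jA; have := h j jA; rewrite inE /= perm1.
  move=> h; apply/fintype.subsetP => j jA; rewrite inE /= perm1; exact: h.
by rewrite -ev_sum eA allbad card_A0.
Qed.

Lemma ev_not (Q : pred cT_) : ev (fun c => ~~ Q c) = ~` ev Q.
Proof. by apply/seteqP; split => w; rewrite /ev /= => /negP. Qed.

Let Z := fun i w => X i w + Y i w.

Lemma eS : success_event m Z X xa = ev (fun c => ~~ (c.1 \subset c.2)).
Proof.
apply/seteqP; split => w; rewrite /ev /success_event /=.
  move=> [j [jS jX]]; apply/fintype.subsetPn; exists j.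
    by rewrite inE (_ : zf _ = Z^~ w) //; apply/funext => k; rewrite /zf /= perm1.
  by rewrite inE /= perm1 -leNgt.
move/fintype.subsetPn => [j]; rewrite !inE /= perm1 -leNgt => jS jX.
exists j; split => //.
by move: jS; rewrite (_ : zf _ = Z^~ w) //; apply/funext => k; rewrite /zf /= perm1.
Qed.

Lemma main_lower : ((1 - (1 - alpha) ^+ m)%:E <= P (success_event m Z X xa))%E.
Proof.
rewrite eS ev_not probability_setC; last exact: mev.
by rewrite EFinB; apply: leeB => //; exact: fail_le.
Qed.

Lemma main_upper : (P (success_event m Z X xa) <= (1 - (1 - alpha) ^+ n)%:E)%E.
Proof.
rewrite eS ev_not.
pose All := [set w | forall j, j \in [set: 'I_n]%SET -> (xa < (X j w)%:E)%E].
have mAll : measurable All.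
  have -> : All = \bigcap_(j in [set: 'I_n]) (X j @^-1` [set r | (xa < r%:E)%E]).
    by apply/seteqP; split => w /= h j _; apply: h.
  apply: fin_bigcap_measurable; first exact: finite_finset.
  move=> j _; rewrite -[X in measurable X]setTI; apply: mX => //; exact: meas_gt.
apply: (@le_trans _ _ (P (~` All))).
  apply: le_measure; first by apply/mem_set/measurableC/mev.
    exact/mem_set/measurableC.
  move=> w /= hS hA; apply: hS; rewrite /ev /=; apply/fintype.subsetP => j _.
  by rewrite inE /= perm1; apply: hA; rewrite inE.
by rewrite probability_setC // allbad cardsT card_ord EFinB.
Qed.

End Prob.

Unset Implicit Arguments.
Local Open Scope classical_set_scope.
Local Open Scope ring_scope.

Theorem mainTheorem1 (d : measure_display) (T : measurableType d) (R : realType)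
  (P : probability T R) (n m : nat) (alpha : R) (xa : \bar R)
  (X Y : 'I_n -> {RV P >-> R}) :
  (0 < m)%N -> (m <= n)%N -> 0 <= alpha -> alpha <= 1 ->
  mutual_indep P (fun i : 'I_n + 'I_n =>
    match i with inl k => (X k : T -> R) | inr k => (Y k : T -> R) end) ->
  (forall i j, same_law P (X i) (X j)) ->
  (forall i j, same_law P (Y i) (Y j)) ->
  (forall i, atomless P (X i)) ->
  (forall i, atomless P (Y i)) ->
  (forall i, P [set w | ((X i w)%:E <= xa)%E] = alpha%:E) ->
  let Z := fun i w => X i w + Y i w in
  ((1 - (1 - alpha) ^+ m)%:E <= P (success_event m Z (fun i => X i : T -> R) xa))%E /\
  (P (success_event m Z (fun i => X i : T -> R) xa) <= (1 - (1 - alpha) ^+ n)%:E)%E.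
Proof.
move=> _ mn _ _ ind lX _ _ _ hal Z.
have mXk : forall k, measurable_fun setT (X k : T -> R) by move=> k; exact: measurable_funPT.
have mYk : forall k, measurable_fun setT (Y k : T -> R) by move=> k; exact: measurable_funPT.
split.
- exact: (@main_lower d T R P n m alpha xa (fun k => (X k : T -> R)) (fun k => (Y k : T -> R)) mXk mYk ind lX hal mn).
- exact: (@main_upper d T R P n m alpha xa (fun k => (X k : T -> R)) (fun k => (Y k : T -> R)) mXk mYk ind hal).
Qed.
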